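(* A set of atoms $M$ is an answer set by reduct of a basic program $P$ if and only if $M$ is a weakly well-supported model of $P$.
   Context: Fix a countable set $\mathcal{A}$ of atoms. A c-atom is $A=(A_d,A_c)$, $A_d\subseteq\mathcal{A}$, $A_c\subseteq 2^{A_d}$; $(\{p\},\{\{p\}\})$ is elementary; $\bot=(\mathcal{A},\emptyset)$. Rule: $A\leftarrow A_1,\dots,A_k,\mathit{not}\,A_{k+1},\dots,\mathit{not}\,A_n$, $head(r)=A$, $pos(r)=\{A_1,..,A_k\}$, $neg(r)=\{A_{k+1},..,A_n\}$. Program = set of rules; positive if no naf-literals; basic if every head is elementary or $\bot$. $S\models A$ iff $S\cap A_d\in A_c$; $S\models\mathit{not}\,A$ iff $S\cap A_d\notin A_c$; $S\models body(r)$ if all body literals hold; rule satisfied if head holds or body fails; model = satisfies all rules. Conditional satisfaction: $S\models_M A$ iff $S\models A$ and every $I$ with $S\cap A_d\subseteq I\subseteq M\cap A_d$ lies in $A_c$. For positive basic $P$: $T_P(S,M)=\{a\mid \exists r\in P,\ head(r)=(\{a\},\{\{a\}\}),\ S\models_M B\ \forall B\in pos(r)\}$, $T^0_P(\emptyset,M)=\emptyset$, $T^{i+1}_P(\emptyset,M)=T_P(T^i_P(\emptyset,M),M)$, $T^\infty_P(\emptyset,M)=\bigcup_i T^i_P(\emptyset,M)$; a model $M$ is an answer set iff $M=T^\infty_P(\emptyset,M)$. Reduct $P^M$: delete rules with some $\mathit{not}\,A$ in the body where $M\models A$, then delete remaining naf-literals; $M$ is an answer set by reduct of $P$ iff it is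 an answer set of $P^M$. Level mappings: for a set $M$ and $\ell:M\to\{1,2,\dots\}$, put $H(X)=\max\{\ell(a)\mid a\in X\}$ for $X\subseteq M$ (with $\max\emptyset=0$), and $L(A,M)=\min\{H(X)\mid X\in A_c,\ X\subseteq M,\ X\models_M A\}$, undefined if this set is empty. A model $M$ of basic $P$ is weakly well-supported iff there is such an $\ell$ such that for each $b\in M$ some $r\in P$ has $head(r)=(\{b\},\{\{b\}\})$, $M\models body(r)$, and for every $A\in pos(r)$, $L(A,M)$ is defined and $\ell(b)>L(A,M)$. *)

(* Defs.v *)
From Stdlib Require Import List.
Set Implicit Arguments.

Section Defs.
Variable Atom : Type.

Definition aset := Atom -> Prop.

Record catom := CAtom { Ad : aset ; Ac : aset -> Prop }.

Definition wf_catom (A : catom) : Prop :=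
  forall X, Ac A X -> forall x, X x -> Ad A x.

Definition is_elem (A : catom) (p : Atom) : Prop :=
  (forall x, Ad A x <-> x = p) /\
  (forall X, Ac A X <-> (forall x, X x <-> x = p)).

Definition is_bot (A : catom) : Prop :=
  (forall x, Ad A x) /\ (forall X, ~ Ac A X).

Record rule := Rule { head : catom ; pos : list catom ; neg : list catom }.

Definition program := rule -> Prop.

Definition wf_program (P : program) : Prop :=
  forall r, P r -> wf_catom (head r) /\ (forall A, In A (pos r) -> wf_catom A)
                  /\ (forall A, In A (neg r) -> wf_catom A).

Definition positive (P : program) : Prop := forall r, P r -> neg r = nil.

Definition basic (P : program) : Prop :=
  forall r, P r -> (exists p, is_elem (head r) p) \/ is_bot (head r).

Definition sat (S : aset) (A : catom) : Prop :=
  Ac A (fun x => S x /\ Ad A x).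

Definition sat_body (S : aset) (r : rule) : Prop :=
  (forall A, In A (pos r) -> sat S A) /\ (forall A, In A (neg r) -> ~ sat S A).

Definition sat_rule (S : aset) (r : rule) : Prop :=
  sat S (head r) \/ ~ sat_body S r.

Definition model (P : program) (M : aset) : Prop :=
  forall r, P r -> sat_rule M r.

Definition cond_sat (S M : aset) (A : catom) : Prop :=
  sat S A /\
  forall I : aset, (forall x, S x /\ Ad A x -> I x) ->
                   (forall x, I x -> M x /\ Ad A x) -> Ac A I.

Definition TP (P : program) (S M : aset) : aset :=
  fun a => exists r, P r /\ is_elem (head r) a /\
                     forall B, In B (pos r) -> cond_sat S M B.

Fixpoint TPn (P : program) (M : aset) (i : nat) : aset :=
  match i with
  | O => fun _ => False
  | S i' => TP P (TPn P M i') M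
  end.

Definition TPinf (P : program) (M : aset) : aset :=
  fun a => exists i, TPn P M i a.

Definition answer_set_pos (P : program) (M : aset) : Prop :=
  model P M /\ (forall a, M a <-> TPinf P M a).

Definition reduct (P : program) (M : aset) : program :=
  fun r' => exists r, P r /\ (forall A, In A (neg r) -> ~ sat M A) /\
                      r' = Rule (head r) (pos r) nil.

Definition answer_set_reduct (P : program) (M : aset) : Prop :=
  answer_set_pos (reduct P M) M.

(* H(X) = max { l a | a in X } (max of empty = 0), as a relation:
   h is the least upper bound in nat of the levels of X
   (exists iff the max exists). *)
Definition IsH (l : Atom -> nat) (X : aset) (h : nat) : Prop :=
  (forall a, X a -> l a <= h) /\
  (forall h', (forall a, X a -> l a <= h') -> h <= h').

Definition L_cand (M : aset) (A : catom) (X : aset) : Prop :=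
  Ac A X /\ (forall x, X x -> M x) /\ cond_sat X M A.

Definition LevelL (l : Atom -> nat) (A : catom) (M : aset) (n : nat) : Prop :=
  (exists X, L_cand M A X /\ IsH l X n) /\
  (forall X h, L_cand M A X -> IsH l X h -> n <= h).

Definition weakly_well_supported (P : program) (M : aset) : Prop :=
  model P M /\
  exists l : Atom -> nat,
    (forall a, M a -> 1 <= l a) /\
    forall b, M b ->
      exists r, P r /\ is_elem (head r) b /\ sat_body M r /\
        forall A, In A (pos r) -> exists n, LevelL l A M n /\ n < l b.

End Defs.

(* Main.v *)
Require Import Defs.
From Stdlib Require Import List Classical ClassicalEpsilon Lia Wf_nat Arith.

Lemma nat_min (Q : nat -> Prop) m : Q m -> exists n, Q n /\ forall k, Q k -> n <= k.
Proof.
  induction m as [m IH] using lt_wf_ind. intros Qm.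
  destruct (classic (exists k, Q k /\ k < m)) as [[k [Qk lt]]|N].
  - exact (IH k lt Qk).
  - exists m; split; auto. intros k Qk. destruct (le_lt_dec m k); auto.
    exfalso; apply N; eauto.
Qed.

Section S.
Variable Atom : Type.

Lemma cs_sat (S M : aset Atom) A : (forall x, S x -> M x) -> cond_sat S M A -> sat M A.
Proof.
  intros sub [_ H]. apply H.
  - intros x [Sx Ax]; split; auto.
  - intros x h; exact h.
Qed.

Lemma cs_mono (X S M : aset Atom) A : (forall x, X x -> S x) -> (forall x, S x -> M x) ->
  cond_sat X M A -> cond_sat S M A.
Proof.
  intros h1 h2 [_ H]. split.
  - unfold sat. apply H.
    + intros x [Xx Ax]; split; auto.
    + intros x [Sx Ax]; split; auto.
  - intros I h3 h4; apply H; auto.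
    intros x [Xx Ax]; apply h3; split; auto.
Qed.

Lemma isH_ex (l : Atom -> nat) (X : aset Atom) B : (forall a, X a -> l a <= B) ->
  exists h, IsH l X h.
Proof.
  intros HB. destruct (nat_min (fun h => forall a, X a -> l a <= h) B HB) as [n [Hn Hm]].
  exists n; split; auto.
Qed.

Lemma level_ex (l : Atom -> nat) A M X h : L_cand M A X -> IsH l X h ->
  exists n, LevelL l A M n /\ n <= h.
Proof.
  intros HX Hh.
  destruct (nat_min (fun n => exists X, L_cand M A X /\ IsH l X n) h (ex_intro _ X (conj HX Hh)))
    as [n [Hn Hm]].
  exists n; split.
  - split; auto. intros Y k HY Hk. apply Hm; eauto.
  - apply Hm; eauto.
Qed.
End S.

Theorem proposition5 (Atom : Type)
  (Hcount : exists f : Atom -> nat, forall x y, f x = f y -> x = y)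
  (P : program Atom) (HwfP : wf_program P) (Hbasic : basic P) (M : aset Atom) :
  answer_set_reduct P M <-> weakly_well_supported P M.
Proof.
  set (R := reduct P M).
  split.
  - intros [Hmod Hiff].
    assert (TsubM : forall i a, TPn R M i a -> M a).
    { intros i a h. apply Hiff. exists i; exact h. }
    split.
    + intros r Pr.
      destruct (classic (exists A, In A (neg r) /\ sat M A)) as [[A [inA sA]] | N].
      * right; intros [_ Hn]; exact (Hn A inA sA).
      * assert (Rr : R (Rule (Defs.head r) (pos r) (@nil (catom Atom)))).
        { unfold R, reduct. exists r; split; [exact Pr|split; [|reflexivity]].
          intros A inA sA; apply N; eauto. }
        destruct (Hmod _ Rr) as [h|nb]; [left; exact h|].
        right; intros [hp hn]; apply nb; split; simpl; auto.
    + assert (Hl : forall a, exists n, TPinf R M a ->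
                 TPn R M n a /\ forall j, TPn R M j a -> n <= j).
      { intros a. destruct (classic (TPinf R M a)) as [[i Hi]|Nn].
        - destruct (nat_min (fun j => TPn R M j a) i Hi) as [n [Hn Hmin]]. exists n; auto.
        - exists 0; intros H; contradiction. }
      set (l := fun a => proj1_sig (constructive_indefinite_description _ (Hl a))).
      assert (Hls : forall a, TPinf R M a -> TPn R M (l a) a /\ forall j, TPn R M j a -> l a <= j).
      { intros a. exact (proj2_sig (constructive_indefinite_description _ (Hl a))). }
      exists l. split.
      * intros a Ma. destruct (Hls a (proj1 (Hiff a) Ma)) as [H _].
        revert H; destruct (l a); simpl; [tauto|lia].
      * intros b Mb. destruct (Hls b (proj1 (Hiff b) Mb)) as [Hb Hmin].
        revert Hb; destruct (l b) as [|k] eqn:Ek; simpl; [tauto|].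
        intros [r' [Rr' [He Hpos]]].
        destruct Rr' as [r [Pr [Hneg ->]]]. simpl in He, Hpos.
        exists r; split; [exact Pr|split; [exact He|split]].
        -- split; [|exact Hneg]. intros A inA.
           apply (cs_sat _ (TPn R M k)); [apply TsubM|auto].
        -- intros A inA. pose proof (Hpos A inA) as cs.
           set (X := fun x => TPn R M k x /\ Ad A x).
           assert (HX : L_cand M A X).
           { split; [exact (proj1 cs)|split].
             - intros x [Tx _]; eapply TsubM; eauto.
             - split.
               + unfold sat. apply (proj2 cs).
                 * intros x [Tx Ax]; unfold X; auto.
                 * intros x [[Tx Ax] _]; split; eauto.
               + intros I h1 h2; apply (proj2 cs); auto.
                 intros x [Tx Ax]; apply h1; unfold X; auto. }
           assert (Hbd : forall a, X a -> l a <= k).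
           { intros a [Ta _]. apply (proj2 (Hls a (ex_intro _ k Ta))); exact Ta. }
           destruct (isH_ex _ l X k Hbd) as [h Hh].
           destruct (level_ex _ l A M X h HX Hh) as [n [Hn Hnh]].
           exists n; split; [exact Hn|].
           pose proof (proj2 Hh k Hbd). lia.
  - intros [Hmod [l [Hl1 Hsup]]].
    assert (HmodR : model R M).
    { intros r' [r [Pr [Hneg ->]]]. unfold sat_rule; simpl.
      destruct (Hmod r Pr) as [h|nb]; [left; exact h|].
      right; intros [hp _]; apply nb; split; [exact hp|exact Hneg]. }
    assert (TsubM : forall i a, TPn R M i a -> M a).
    { induction i; simpl; [tauto|].
      intros a [r' [Rr' [He Hpos]]].
      assert (sb : sat_body M r').
      { split.
        - intros A inA. exact (cs_sat _ _ _ _ IHi (Hpos A inA)).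
        - destruct Rr' as [r [_ [_ ->]]]. simpl. intros A []. }
      destruct (HmodR r' Rr') as [h|nb]; [|contradiction].
      unfold sat in h. apply (proj1 (proj2 He _)) with (x := a) in h; simpl in h. destruct (proj2 h eq_refl); auto. }
    assert (claim : forall k b, M b -> l b <= k -> TPn R M k b).
    { induction k.
      - intros b Mb Hle. pose proof (Hl1 b Mb). lia.
      - intros b Mb Hle. destruct (Hsup b Mb) as [r [Pr [He [[Hp Hn] Hlev]]]].
        simpl. exists (Rule (Defs.head r) (pos r) (@nil (catom Atom))).
        split; [exists r; auto|split; simpl; [exact He|]].
        intros A inA. destruct (Hlev A inA) as [n [[[X [[AcX [XM csX]] HX]] _] ltn]].
        apply (cs_mono _ X); auto.
        + intros x Xx. apply IHk; [auto|]. pose proof (proj1 HX x Xx). lia.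
        + apply TsubM. }
    split; [exact HmodR|].
    intros a; split.
    + intros Ma. exists (l a). apply claim; auto.
    + intros [i Hi]. eapply TsubM; eauto.
Qed.
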